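(* For every $\ell\in\mathbb N\cup\{\infty\}$ (with $\mathbb N$ the positive integers), there exists an integral domain that is not atomic, is an IDF domain, and contains exactly $\ell$ irreducible elements up to associates.
   Context: For an integral domain $R$, an irreducible (atom) is a nonzero nonunit $a$ such that $a=uv$ implies $u$ or $v$ is a unit. $R$ is atomic if every nonzero nonunit is a finite product of irreducibles. $R$ is an IDF domain if every nonzero element is divisible by only finitely many irreducibles up to associates. *)

(* Defs.v *)
From HB Require Import structures.
From mathcomp Require Import all_boot all_algebra.
Set Implicit Arguments. Unset Strict Implicit. Unset Printing Implicit Defensive.
Import GRing.Theory.
Local Open Scope ring_scope.

Definition rdivides (R : idomainType) (a x : R) : Prop := exists c : R, x = a * c.

Definition associated (R : idomainType) (a b : R) : Prop :=
  exists u : R, u \is a GRing.unit /\ a = u * b.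

Definition irreducible_elt (R : idomainType) (a : R) : Prop :=
  a != 0 /\ a \isn't a GRing.unit /\
  forall u v : R, a = u * v -> u \is a GRing.unit \/ v \is a GRing.unit.

Definition atomic (R : idomainType) : Prop :=
  forall x : R, x != 0 -> x \isn't a GRing.unit ->
    exists s : seq R, (forall a, a \in s -> irreducible_elt a) /\
                      x = \prod_(a <- s) a.

Definition IDF (R : idomainType) : Prop :=
  forall x : R, x != 0 ->
    exists s : seq R, forall a : R, irreducible_elt a -> rdivides a x ->
      exists2 b, b \in s & associated a b.

Definition atoms_up_to_assoc_card (R : idomainType) (n : nat) : Prop :=
  exists s : seq R,
    [/\ size s = n,
        (forall a, a \in s -> irreducible_elt a),
        (forall i j, (i < size s)%N -> (j < size s)%N -> i <> j ->
           ~ associated (nth 0 s i) (nth 0 s j)) &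
        (forall a : R, irreducible_elt a -> exists2 b, b \in s & associated a b)].

Definition atoms_up_to_assoc_infinite (R : idomainType) : Prop :=
  exists f : nat -> R, (forall i, irreducible_elt (f i)) /\
    (forall i j, i <> j -> ~ associated (f i) (f j)).

(* ell : option nat encodes N ∪ {∞}: Some n is n (n >= 1), None is ∞. *)
Definition exactly_atoms (R : idomainType) (ell : option nat) : Prop :=
  match ell with
  | Some n => atoms_up_to_assoc_card R n
  | None => atoms_up_to_assoc_infinite R
  end.

(* Main.v *)
From HB Require Import structures.
Require Import Defs.
From mathcomp Require Import all_boot all_algebra.
From mathcomp Require Import all_field.
From mathcomp Require Import ring.
From Stdlib Require Import Classical ClassicalEpsilon.
Set Implicit Arguments. Unset Strict Implicit. Unset Printing Implicit Defensive.
Import GRing.Theory Num.Theory.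
Local Open Scope ring_scope.

Record subring (A : idomainType) := SubRing {
  srP :> pred A;
  sr1 : srP 1;
  srB : forall x y, srP x -> srP y -> srP (x - y);
  srM : forall x y, srP x -> srP y -> srP (x * y) }.

Section Gen.
Variables (A : idomainType) (S : subring A).

Definition sT := {x : A | S x}.
HB.instance Definition _ := Choice.on sT.

Lemma sr0 : S 0. Proof. by rewrite -(subrr 1); apply: srB; apply: sr1. Qed.
Lemma srN x : S x -> S (- x). Proof. by move=> h; rewrite -sub0r; apply: srB => //; apply: sr0. Qed.
Lemma srD x y : S x -> S y -> S (x + y).
Proof. by move=> hx hy; rewrite -[y]opprK; apply: srB => //; apply: srN. Qed.

Definition s0 : sT := exist _ 0 sr0.
Definition s1 : sT := exist _ 1 (sr1 S).
Definition sadd (x y : sT) : sT := exist _ (val x + val y) (srD (valP x) (valP y)).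
Definition sopp (x : sT) : sT := exist _ (- val x) (srN (valP x)).
Definition smul (x y : sT) : sT := exist _ (val x * val y) (srM (valP x) (valP y)).

Lemma saddA : associative sadd. Proof. by move=> x y z; apply: val_inj; rewrite /= addrA. Qed.
Lemma saddC : commutative sadd. Proof. by move=> x y; apply: val_inj; rewrite /= addrC. Qed.
Lemma sadd0 : left_id s0 sadd. Proof. by move=> x; apply: val_inj; rewrite /= add0r. Qed.
Lemma saddN : left_inverse s0 sopp sadd. Proof. by move=> x; apply: val_inj; rewrite /= addNr. Qed.
HB.instance Definition _ := GRing.isZmodule.Build sT saddA saddC sadd0 saddN.
Lemma smulA : associative smul. Proof. by move=> x y z; apply: val_inj; rewrite /= mulrA. Qed.
Lemma smulC : commutative smul. Proof. by move=> x y; apply: val_inj; rewrite /= mulrC. Qed.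
Lemma smul1 : left_id s1 smul. Proof. by move=> x; apply: val_inj; rewrite /= mul1r. Qed.
Lemma smulD : left_distributive smul sadd. Proof. by move=> x y z; apply: val_inj; rewrite /= mulrDl. Qed.
Lemma s1_neq0 : s1 != s0. Proof. by apply/eqP => /(congr1 val) /= /eqP; rewrite oner_eq0. Qed.
HB.instance Definition _ := GRing.Zmodule_isComNzRing.Build sT smulA smulC smul1 smulD s1_neq0.

Definition sunit (x : sT) : bool :=
  if excluded_middle_informative (exists y : sT, y * x = 1) then true else false.
Definition sinv (x : sT) : sT :=
  match excluded_middle_informative (exists y : sT, y * x = 1) with
  | left H => proj1_sig (constructive_indefinite_description _ H)
  | right _ => x end.

Lemma smulVx : {in sunit, left_inverse 1 sinv *%R}.
Proof.
move=> x; rewrite unfold_in /sunit /sinv; case: excluded_middle_informative => // H _.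
by case: constructive_indefinite_description.
Qed.
Lemma sunitPl : forall x y : sT, y * x = 1 -> sunit x.
Proof. by move=> x y h; rewrite /sunit; case: excluded_middle_informative => // [[]]; exists y. Qed.
Lemma sinv_out : {in [predC sunit], sinv =1 id}.
Proof. by move=> x; rewrite inE /= unfold_in /sunit /sinv; case: excluded_middle_informative. Qed.
HB.instance Definition _ := GRing.ComNzRing_hasMulInverse.Build sT smulVx sunitPl sinv_out.

Lemma sidom : GRing.integral_domain_axiom sT.
Proof.
move=> x y /(congr1 val) /= /eqP; rewrite mulf_eq0 => /orP [] /eqP h;
  apply/orP; [left|right]; apply/eqP; exact: val_inj.
Qed.
HB.instance Definition _ := GRing.ComUnitRing_isIntegral.Build sT sidom.

Lemma sunitE (x : sT) : (x \is a GRing.unit) <-> exists y : A, S y /\ y * val x = 1.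
Proof.
split.
  by move=> /unitrP [y [hy _]]; exists (val y); split; [exact: valP | exact: (congr1 val hy)].
move=> [y [Sy hy]]; apply/unitrP; exists (exist _ y Sy).
by split; apply: val_inj => //=; rewrite mulrC.
Qed.

Lemma sv_prod (s : seq sT) : val (\prod_(a <- s) a) = \prod_(a <- s) val a.
Proof. by elim: s => [|a s IH]; rewrite ?big_nil ?big_cons //= IH. Qed.

Lemma svM (x y : sT) : val (x * y) = val x * val y. Proof. by []. Qed.
Lemma sv1 : val (1 : sT) = 1. Proof. by []. Qed.
Lemma sv0 : val (0 : sT) = 0. Proof. by []. Qed.
End Gen.

Definition asb (P : Prop) : bool := if excluded_middle_informative P then true else false.
Lemma asbP (P : Prop) : reflect P (asb P).
Proof. by rewrite /asb; case: excluded_middle_informative => h; constructor. Qed.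

Fixpoint pr (i : nat) : nat :=
  if i is i'.+1 then sval (prime_above (pr i')) else 2.
Lemma pr_prime i : prime (pr i).
Proof. by case: i => [|i] //=; case: prime_above. Qed.
Lemma pr_lt i : (pr i < pr i.+1)%N.
Proof. by rewrite /=; case: prime_above. Qed.
Lemma pr_mono i j : (i < j)%N -> (pr i < pr j)%N.
Proof.
elim: j => // j IH; rewrite ltnS leq_eqVlt => /orP [/eqP -> | h]; first exact: pr_lt.
exact: ltn_trans (IH h) (pr_lt j).
Qed.
Lemma pr_inj : injective pr.
Proof.
move=> i j h; apply/eqP; case: ltngtP => // hij; have := pr_mono hij; by rewrite h ltnn.
Qed.

Section DS.
Variable n : nat.
Definition pz i : int := (pr i)%:Z.
Definition goodden (b : int) := b != 0 /\ forall i, (i < n)%N -> ~~ (pz i %| b)%Z.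
Definition Dp (q : rat) : Prop := exists a b : int, goodden b /\ q = a%:~R / b%:~R.
Definition D : pred rat := fun q => asb (Dp q).

Lemma DP q : D q <-> Dp q. Proof. by split => /asbP. Qed.

Lemma prdvdM i (a b : int) : (pz i %| a * b)%Z = (pz i %| a)%Z || (pz i %| b)%Z.
Proof. by rewrite !unfold_in /dvdz abszM Euclid_dvdM // pr_prime. Qed.

Lemma goodM a b : goodden a -> goodden b -> goodden (a * b).
Proof.
move=> [a0 ha] [b0 hb]; split; first by rewrite mulf_neq0.
by move=> i hi; rewrite prdvdM negb_or ha ?hb.
Qed.
Lemma good1 : goodden 1.
Proof. split => // i _; rewrite unfold_in /dvdz /= dvdn1; apply/negP => /eqP h; have := pr_prime i; by rewrite h. Qed.

Lemma D1 : D 1. Proof. by apply/DP; exists 1, 1; split; [exact: good1 | rewrite divr1]. Qed.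
Lemma Dint (m : int) : D m%:~R. Proof. by apply/DP; exists m, 1; split; [exact: good1 | rewrite divr1]. Qed.
Lemma DM x y : D x -> D y -> D (x * y).
Proof.
move=> /DP [a [b [gb ->]]] /DP [a' [b' [gb' ->]]]; apply/DP; exists (a * a'), (b * b').
split; first exact: goodM.
have [b0 _] := gb; have [b0' _] := gb'.
have hb : b%:~R != 0 :> rat by rewrite intr_eq0.
have hb' : b'%:~R != 0 :> rat by rewrite intr_eq0.
rewrite !rmorphM /=; field; by rewrite hb hb'.
Qed.
Lemma DB x y : D x -> D y -> D (x - y).
Proof.
move=> /DP [a [b [gb ->]]] /DP [a' [b' [gb' ->]]]; apply/DP; exists (a * b' - a' * b), (b * b').
split; first exact: goodM.
have [b0 _] := gb; have [b0' _] := gb'.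
have hb : b%:~R != 0 :> rat by rewrite intr_eq0.
have hb' : b'%:~R != 0 :> rat by rewrite intr_eq0.
rewrite !rmorphM rmorphB !rmorphM /=; field; by rewrite hb hb'.
Qed.

Definition Dunit (q : rat) := (q != 0) && D q^-1.

Lemma D2 q : D q -> q != 0 -> ~~ D q^-1 -> exists2 i, (i < n)%N & D (q / (pr i)%:R).
Proof.
move=> /DP [a [b [[b0 gb] ->]]] q0 nD.
have a0 : a != 0 by apply: contraNneq q0 => ->; rewrite mul0r.
have : ~ (forall i, (i < n)%N -> ~~ (pz i %| a)%Z).
  move=> ga; move/negP: nD; apply; apply/DP; exists b, a; split; first by split.
  by rewrite invf_div.
move=> H; have [i Hi] := not_all_ex_not _ _ H.
have [hi /negP] := imply_to_and _ _ Hi; rewrite negbK => dv; exists i => //; apply/DP; exists (a %/ pz i)%Z, b; split; first by split.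
have hp : (pr i)%:R != 0 :> rat by rewrite pnatr_eq0; have := pr_prime i; case: (pr i).
have hb : b%:~R != 0 :> rat by rewrite intr_eq0.
have e : (a %/ pz i)%Z%:~R * (pr i)%:R = a%:~R :> rat.
  by rewrite -[in RHS](divzK dv) rmorphM.
rewrite -e; field; by rewrite hp hb.
Qed.

Lemma Dnot j (m c : int) : (j < n)%N -> c != 0 -> ~~ (pz j %| m)%Z ->
  ~ D (m%:~R / ((pr j)%:R * c%:~R)).
Proof.
move=> hj c0 ndv /DP [A [B [[B0 gB] e]]].
have hp : (pr j)%:R != 0 :> rat by rewrite pnatr_eq0; have := pr_prime j; case: (pr j).
have hc : c%:~R != 0 :> rat by rewrite intr_eq0.
have hB : B%:~R != 0 :> rat by rewrite intr_eq0.
have e2 : (m * B)%:~R = (pz j * c * A)%:~R :> rat.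
  rewrite !rmorphM /=.
  have : m%:~R / ((pr j)%:R * c%:~R) * ((pr j)%:R * c%:~R) * B%:~R
        = A%:~R / B%:~R * B%:~R * ((pr j)%:R * c%:~R) :> rat by rewrite e; ring.
  rewrite !divfK ?mulf_neq0 //. by move=> ->; rewrite /pz; ring.
have e3 := intr_inj e2.
have : (pz j %| m * B)%Z by rewrite e3 -mulrA dvdz_mulr // dvdzz.
by rewrite prdvdM (negbTE ndv) (negbTE (gB j hj)).
Qed.

Lemma pz_ndvd i j : i != j -> ~~ (pz i %| pz j)%Z.
Proof.
move=> ij; rewrite unfold_in /dvdz /pz /= dvdn_prime2 ?pr_prime //.
by apply: contra ij => /eqP /pr_inj ->.
Qed.
Lemma pz_ndvd1 i : ~~ (pz i %| 1)%Z.
Proof. by rewrite unfold_in /dvdz /pz /= Euclid_dvd1 ?pr_prime. Qed.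
Lemma prn0 i : (pr i)%:R != 0 :> rat.
Proof. by rewrite pnatr_eq0; have := pr_prime i; case: (pr i). Qed.

Lemma Dpr i : D (pr i)%:R.
Proof. by have := Dint (pz i); rewrite /pz. Qed.

Lemma Dninv i : (i < n)%N -> ~ D (pr i)%:R^-1.
Proof.
move=> hi h; apply: (@Dnot i 1 1) => //; first exact: pz_ndvd1.
by rewrite !mulr1 div1r.
Qed.

Lemma Dndiv i j : (i < n)%N -> i != j -> ~ D ((pr j)%:R / (pr i)%:R).
Proof.
move=> hi ij h; apply: (@Dnot i (pz j) 1) => //; first exact: pz_ndvd.
by rewrite mulr1 /pz.
Qed.

Lemma D3 i a b : (i < n)%N -> D a -> D b -> a * b = (pr i)%:R -> Dunit a \/ Dunit b.
Proof.
move=> hi Da Db e.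
have a0 : a != 0 by apply: contraTneq isT => a0; move: e; rewrite a0 mul0r => /eqP; rewrite eq_sym (negbTE (prn0 i)).
have b0 : b != 0 by apply: contraTneq isT => b0; move: e; rewrite b0 mulr0 => /eqP; rewrite eq_sym (negbTE (prn0 i)).
apply: NNPP => /not_or_and [na nb].
have na' : ~~ D a^-1 by apply/negP => h; apply: na; rewrite /Dunit a0.
have nb' : ~~ D b^-1 by apply/negP => h; apply: nb; rewrite /Dunit b0.
have [j hj Dj] := D2 Da a0 na'.
have [k hk Dk] := D2 Db b0 nb'.
have := DM Dj Dk.
have -> : a / (pr j)%:R * (b / (pr k)%:R) = (pr i)%:R / ((pr j)%:R * (pr k)%:R).
  rewrite -e; field; by rewrite !prn0.
have [->|ij] := eqVneq j i.
  have -> : (pr i)%:R / ((pr i)%:R * (pr k)%:R) = 1%:~R / ((pr k)%:R * 1%:~R) :> rat.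
    field; by rewrite !prn0.
  apply: Dnot => //; exact: pz_ndvd1.
have -> : (pr i)%:R / ((pr j)%:R * (pr k)%:R) = (pz i)%:~R / ((pr j)%:R * (pz k)%:~R) :> rat by [].
apply: Dnot => //; first by rewrite /pz eqz_nat; have := pr_prime k; case: (pr k).
exact: pz_ndvd.
Qed.
End DS.

Section PB.
Variables (F : idomainType) (V : pred F) (ev : F -> rat) (emb : {rmorphism rat -> F}) (X : F) (n : nat).
Hypotheses (V1 : V 1) (VB : forall x y, V x -> V y -> V (x - y)) (VM : forall x y, V x -> V y -> V (x * y))
  (evB : forall x y, V x -> V y -> ev (x - y) = ev x - ev y)
  (evM : forall x y, V x -> V y -> ev (x * y) = ev x * ev y)
  (Vemb : forall c, V (emb c)) (evemb : forall c, ev (emb c) = c)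
  (Vloc : forall x, V x -> ev x != 0 -> exists y, V y /\ y * x = 1)
  (VX : V X) (evX : ev X = 0) (X0 : X != 0) (n0 : (0 < n)%N).

Definition PBP : pred F := fun x => V x && D n (ev x).
Lemma ev1 : ev 1 = 1. Proof. by rewrite -(rmorph1 emb) evemb. Qed.
Lemma PB1 : PBP 1. Proof. by rewrite /PBP V1 ev1 D1. Qed.
Lemma PBB x y : PBP x -> PBP y -> PBP (x - y).
Proof. by move=> /andP [hx dx] /andP [hy dy]; rewrite /PBP VB // evB // DB. Qed.
Lemma PBM x y : PBP x -> PBP y -> PBP (x * y).
Proof. by move=> /andP [hx dx] /andP [hy dy]; rewrite /PBP VM // evM // DM. Qed.
Definition PBS := SubRing PB1 PBB PBM.
Definition PBR := sT PBS.

Lemma Vval (x : PBR) : V (val x). Proof. by case/andP: (valP x). Qed.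
Lemma Dval (x : PBR) : D n (ev (val x)). Proof. by case/andP: (valP x). Qed.
Lemma PBemb c : D n c -> PBP (emb c). Proof. by move=> h; rewrite /PBP Vemb evemb. Qed.
Definition pe (i : nat) : PBR := exist _ (emb (pr i)%:R) (PBemb (Dpr n i)).
Lemma evpe i : ev (val (pe i)) = (pr i)%:R. Proof. exact: evemb. Qed.

Lemma unitR (x : PBR) : x \is a GRing.unit <-> Dunit n (ev (val x)).
Proof.
split.
  move=> /sunitE [y [/andP [Vy Dy] e]].
  have e2 : ev y * ev (val x) = 1 by rewrite -evM ?Vval // e ev1.
  have x0 : ev (val x) != 0 by apply: contraTneq isT => h; move: e2; rewrite h mulr0 => /eqP; rewrite eq_sym oner_eq0.
  rewrite /Dunit x0 /=; suff -> : (ev (val x))^-1 = ev y by [].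
  by apply: (mulIf x0); rewrite mulVf // e2.
move=> /andP [x0 Dx]; have [y [Vy e]] := Vloc (Vval x) x0.
apply/sunitE; exists y; split => //; apply/andP; split => //.
have e2 : ev y * ev (val x) = 1 by rewrite -evM ?Vval // e ev1.
suff -> : ev y = (ev (val x))^-1 by [].
by apply: (mulIf x0); rewrite mulVf // e2.
Qed.

Lemma pe_nunit i : (i < n)%N -> pe i \isn't a GRing.unit.
Proof. move=> hi; apply/negP => /unitR /andP [_]; rewrite evpe => h; exact: (Dninv hi h). Qed.

Lemma embK c : c != 0 -> emb c * emb c^-1 = 1.
Proof. by move=> c0; rewrite -rmorphM mulfV // rmorph1. Qed.

Definition divpe (x : PBR) (i : nat) (h : D n (ev (val x) / (pr i)%:R)) : PBR :=
  exist _ (val x * emb (pr i)%:R^-1) (introT andP (conj (VM (Vval x) (Vemb _))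
     (eq_ind_r (D n) h (eq_trans (evM (Vval x) (Vemb _)) (congr1 (fun z => ev (val x) * z) (evemb _)))))).

Lemma divpeE (x : PBR) i h : x = pe i * @divpe x i h.
Proof. apply: val_inj => /=; by rewrite mulrCA embK ?prn0 // mulr1. Qed.

Lemma atom_ev (x : PBR) : irreducible_elt x -> ev (val x) != 0.
Proof.
move=> [x0 [xu xat]]; apply/negP => /eqP e.
have h : D n (ev (val x) / (pr 0)%:R) by rewrite e mul0r (Dint n 0).
have [] := xat _ _ (divpeE h) => /unitR /andP [];
  [ move=> _; rewrite evpe => /Dninv; apply; exact: n0
  | by rewrite /= evM ?Vval // e mul0r eqxx ].
Qed.

Lemma atom_assoc (x : PBR) : irreducible_elt x -> exists2 i, (i < n)%N & associated x (pe i).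
Proof.
move=> hx; have x0 := atom_ev hx; have [_ [xu xat]] := hx.
have nD : ~~ D n (ev (val x))^-1 by apply: contra xu => h; apply/unitR; rewrite /Dunit x0.
have [i hi h] := D2 (Dval x) x0 nD.
exists i => //; exists (divpe h); split; last by rewrite mulrC -divpeE.
have [] := xat _ _ (divpeE h) => // pu; by move: (pe_nunit hi); rewrite pu.
Qed.

Lemma pe_atom i : (i < n)%N -> irreducible_elt (pe i).
Proof.
move=> hi; split.
  apply/negP => /eqP /(congr1 val) /= /eqP; rewrite fmorph_eq0; apply/negP; exact: prn0.
split; first exact: pe_nunit.
move=> u v e.
have e2 : ev (val u) * ev (val v) = (pr i)%:R by rewrite -evM ?Vval // -svM -e evpe.
by have [h|h] := D3 hi (Dval u) (Dval v) e2; [left|right]; apply/unitR.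
Qed.

Lemma pe_nassoc i j : (i < n)%N -> (j < n)%N -> i != j -> ~ associated (pe i) (pe j).
Proof.
move=> hi hj ij [u [/unitR /andP [u0 Du] e]].
have e2 : (pr i)%:R = ev (val u) * (pr j)%:R by rewrite -evpe e svM evM ?Vval // evpe.
apply: (@Dndiv n j i hj); first by rewrite eq_sym.
have -> : (pr i)%:R / (pr j)%:R = ev (val u) by rewrite e2 mulfK ?prn0.
exact: Dval.
Qed.

Lemma ev_prod (s : seq PBR) : ev (val (\prod_(a <- s) a)) = \prod_(a <- s) ev (val a).
Proof.
elim: s => [|a s IH]; first by rewrite !big_nil ev1.
by rewrite !big_cons svM evM ?Vval // IH.
Qed.

Definition Xr : PBR := exist _ X (introT andP (conj VX (eq_ind_r (D n) (Dint n 0) evX))).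

Lemma pb_natomic : ~ atomic PBR.
Proof.
move=> at_.
have x0 : Xr != 0 by apply: contra X0 => /eqP /(congr1 val) /= ->.
have xu : Xr \isn't a GRing.unit by apply/negP => /unitR /andP []; rewrite /= evX eqxx.
have [s [hs e]] := at_ _ x0 xu.
have := congr1 (fun z => ev (val z)) e; rewrite /= evX ev_prod => /esym /eqP.
rewrite prodf_seq_eq0 => /hasP [a /hs ha /= /eqP]; apply/eqP; exact: atom_ev.
Qed.

Lemma pb_IDF : IDF PBR.
Proof.
move=> x _; exists (map pe (iota 0 n)) => a ha _.
have [i hi ai] := atom_assoc ha; exists (pe i) => //.
by apply: map_f; rewrite mem_iota.
Qed.

Lemma pb_card : atoms_up_to_assoc_card PBR n.
Proof.
exists (map pe (iota 0 n)); split.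
- by rewrite size_map size_iota.
- by move=> a /mapP [i]; rewrite mem_iota => /andP [_ hi] ->; apply: pe_atom.
- move=> i j; rewrite size_map size_iota => hi hj ij.
  rewrite !(nth_map 0%N) ?size_iota // !nth_iota //.
  by apply: pe_nassoc => //; apply/eqP.
- move=> a ha; have [i hi ai] := atom_assoc ha; exists (pe i) => //.
  by apply: map_f; rewrite mem_iota.
Qed.
End PB.

Notation FF := {fraction {poly rat}}.
Definition tf (p : {poly rat}) : FF := FracField.tofrac p.

Definition Vrel (x : FF) := exists f g : {poly rat}, g.[0] != 0 /\ x * tf g = tf f.
Definition VF : pred FF := fun x => asb (Vrel x).
Definition evrel (x : FF) (r : rat) :=
  exists f g : {poly rat}, [/\ g.[0] != 0, x * tf g = tf f & r = f.[0] / g.[0]].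
Definition evF (x : FF) : rat := epsilon (inhabits 0) (evrel x).

Lemma tfM p q : tf (p * q) = tf p * tf q. Proof. exact: rmorphM. Qed.
Lemma tfB p q : tf (p - q) = tf p - tf q. Proof. exact: rmorphB. Qed.
Lemma tf1 : tf 1 = 1. Proof. exact: rmorph1. Qed.
Lemma tf_inj : injective tf. Proof. by move=> p q /eqP; rewrite /tf tofrac_eq => /eqP. Qed.
Lemma tf0 p : p.[0] != 0 -> tf p != 0.
Proof. by move=> h; rewrite /tf tofrac_eq0; apply: contraNneq h => ->; rewrite horner0. Qed.

Lemma evrel_uniq x r r' : evrel x r -> evrel x r' -> r = r'.
Proof.
move=> [f [g [g0 e ->]]] [f' [g' [g0' e' ->]]].
have ee : f * g' = f' * g.
  apply: tf_inj; rewrite !tfM -e -e'; ring.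
have := congr1 (fun p => p.[0]) ee; rewrite /= !hornerM => h.
by apply/eqP; rewrite eqr_div // h.
Qed.

Lemma evE x f g : g.[0] != 0 -> x * tf g = tf f -> evF x = f.[0] / g.[0].
Proof.
move=> g0 e; have h : evrel x (f.[0] / g.[0]) by exists f, g.
apply: (evrel_uniq _ h); rewrite /evF; apply: epsilon_spec; by exists (f.[0] / g.[0]).
Qed.

Lemma VFP x : VF x <-> Vrel x. Proof. by split => /asbP. Qed.

Lemma VF1 : VF 1. Proof. by apply/VFP; exists 1, 1; rewrite mul1r -polyC1 hornerC oner_eq0. Qed.
Lemma VFB x y : VF x -> VF y -> VF (x - y).
Proof.
move=> /VFP [f [g [g0 e]]] /VFP [f' [g' [g0' e']]]; apply/VFP.
exists (f * g' - f' * g), (g * g'); split; first by rewrite hornerM mulf_neq0.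
by rewrite tfB !tfM -e -e'; ring.
Qed.
Lemma VFM x y : VF x -> VF y -> VF (x * y).
Proof.
move=> /VFP [f [g [g0 e]]] /VFP [f' [g' [g0' e']]]; apply/VFP.
exists (f * f'), (g * g'); split; first by rewrite hornerM mulf_neq0.
by rewrite !tfM -e -e'; ring.
Qed.
Lemma evFB x y : VF x -> VF y -> evF (x - y) = evF x - evF y.
Proof.
move=> /VFP [f [g [g0 e]]] /VFP [f' [g' [g0' e']]].
rewrite (evE g0 e) (evE g0' e') (@evE _ (f * g' - f' * g) (g * g')).
- rewrite hornerD hornerN !hornerM; field; by rewrite g0 g0'.
- by rewrite hornerM mulf_neq0.
- by rewrite tfB !tfM -e -e'; ring.
Qed.
Lemma evFM x y : VF x -> VF y -> evF (x * y) = evF x * evF y.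
Proof.
move=> /VFP [f [g [g0 e]]] /VFP [f' [g' [g0' e']]].
rewrite (evE g0 e) (evE g0' e') (@evE _ (f * f') (g * g')).
- rewrite !hornerM; field; by rewrite g0 g0'.
- by rewrite hornerM mulf_neq0.
- by rewrite !tfM -e -e'; ring.
Qed.

Definition embF : {rmorphism rat -> FF} := (@FracField.tofrac _ \o polyC)%FUN.
Lemma embFE c : embF c = tf c%:P. Proof. by []. Qed.
Lemma VFemb c : VF (embF c).
Proof. by apply/VFP; exists c%:P, 1; rewrite embFE tf1 mulr1 -polyC1 hornerC oner_eq0. Qed.
Lemma evFemb c : evF (embF c) = c.
Proof.
rewrite (@evE _ c%:P 1) ?hornerC -?polyC1 ?hornerC ?divr1 ?oner_eq0 //.
by rewrite embFE polyC1 tf1 mulr1.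
Qed.
Lemma VFloc x : VF x -> evF x != 0 -> exists y, VF y /\ y * x = 1.
Proof.
move=> /VFP [f [g [g0 e]]]; rewrite (evE g0 e) => h.
have f0 : f.[0] != 0 by apply: contraNneq h => ->; rewrite mul0r.
have tg := tf0 g0; have tfn := tf0 f0.
exists (tf g / tf f); split.
  by apply/VFP; exists g, f; split => //; rewrite divfK.
by rewrite mulrAC [tf g * x]mulrC e mulfV.
Qed.
Definition XF : FF := tf 'X.
Lemma VFX : VF XF. Proof. by apply/VFP; exists 'X, 1; rewrite tf1 mulr1 -polyC1 hornerC oner_eq0. Qed.
Lemma evFX : evF XF = 0.
Proof.
rewrite (@evE _ 'X 1) ?hornerX ?mul0r // -?polyC1 ?hornerC ?oner_eq0 //.
by rewrite polyC1 tf1 mulr1.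
Qed.
Lemma XF0 : XF != 0. Proof. by rewrite /XF /tf tofrac_eq0 polyX_eq0. Qed.


Lemma finite_case n : (0 < n)%N -> exists R : idomainType, ~ atomic R /\ IDF R /\ atoms_up_to_assoc_card R n.
Proof.
move=> n0.
exists (PBR n VF1 VFB VFM evFB evFM evFemb).
split; first exact: (pb_natomic VFemb VFloc VFX evFX XF0 n0).
split; first exact: (pb_IDF VFemb VFloc n0).
exact: (pb_card VF1 VFB VFM evFB evFM VFemb evFemb VFloc n0).
Qed.

Fixpoint subprods (rs : seq algC) : seq {poly algC} :=
  if rs is z :: rs' then subprods rs' ++ map (fun q => ('X - z%:P) * q) (subprods rs')
  else [:: 1].

Lemma subprodsP rs m : \prod_(z <- mask m rs) ('X - z%:P) \in subprods rs.
Proof.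
elim: rs m => [|z rs IH] m; first by case: m => [|[] m]; rewrite big_nil mem_seq1.
case: m => [|[] m] /=; rewrite mem_cat.
- by have := IH [::]; rewrite /= big_nil => ->.
- by rewrite big_cons; apply/orP; right; apply: map_f.
- by rewrite IH.
Qed.

Definition preR (q : {poly algC}) : {poly rat} :=
  epsilon (inhabits 0) (fun d => map_poly ratr d = q).

Lemma divs_fin (h : {poly rat}) : h != 0 ->
  exists L : seq {poly rat}, forall d, d %| h -> d.[0] = 1 -> d \in L.
Proof.
move=> h0.
have [rs ers] := closed_field_poly_normal (map_poly (ratr : rat -> algC) h).
exists (map (fun q => preR ((q.[0])^-1 *: q)) (subprods rs)) => d dh d0.
set dC := map_poly (ratr : rat -> algC) d.
have hC0 : lead_coef (map_poly (ratr : rat -> algC) h) != 0.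
  by rewrite lead_coef_eq0 map_poly_eq0.
have : dC %| \prod_(z <- rs) ('X - z%:P).
  rewrite -(eqp_dvdr _ (eqp_scale _ hC0)) -ers /dC dvdp_map //.
move=> /dvdp_prod_XsubC [m /eqpP [[c1 c2] /= /andP [c10 c20] e]].
set q := \prod_(z <- mask m rs) ('X - z%:P) in e.
have dC0 : dC.[0] = 1 by rewrite /dC -(rmorph0 (ratr : rat -> algC)) horner_map d0 rmorph1.
have e0 := congr1 (fun p => p.[0]) e; rewrite /= !hornerZ dC0 mulr1 in e0.
have q0 : q.[0] != 0 by apply: contraNneq c10 => h'; rewrite e0 h' mulr0.
have edC : dC = (q.[0])^-1 *: q.
  by apply: (@scalerI _ _ c1) => //; rewrite e scalerA e0 -mulrA mulfV // mulr1.
apply/mapP; exists q; first exact: subprodsP.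
rewrite -edC /preR.
have ex : exists d', map_poly (ratr : rat -> algC) d' = dC by exists d.
have := epsilon_spec (inhabits 0) _ ex => /map_poly_inj ->. by [].
Qed.

Definition IP : pred {poly rat} := fun p => D 1 p.[0].
Lemma IP1 : IP 1. Proof. by rewrite /IP -polyC1 hornerC D1. Qed.
Lemma IPB x y : IP x -> IP y -> IP (x - y). Proof. by rewrite /IP hornerD hornerN; apply: DB. Qed.
Lemma IPM x y : IP x -> IP y -> IP (x * y). Proof. by rewrite /IP hornerM; apply: DM. Qed.
Definition IS := SubRing IP1 IPB IPM.
Definition RI := sT IS.

Lemma IDval (x : RI) : D 1 (val x).[0]. Proof. exact: (valP x). Qed.

Lemma RI_unit_D (x : RI) : x \is a GRing.unit -> Dunit 1 (val x).[0].
Proof.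
move=> /sunitE [y [Dy e]].
have e2 : y.[0] * (val x).[0] = 1 by rewrite -hornerM e -polyC1 hornerC.
have x0 : (val x).[0] != 0 by apply: contraTneq isT => h; move: e2; rewrite h mulr0 => /eqP; rewrite eq_sym oner_eq0.
rewrite /Dunit x0 /=; suff -> : ((val x).[0])^-1 = y.[0] by [].
by apply: (mulIf x0); rewrite mulVf // e2.
Qed.

Lemma RI_unit_size (x : RI) : x \is a GRing.unit -> (size (val x) <= 1)%N.
Proof.
move=> /sunitE [y [_ e]].
have y0 : y != 0 by apply: contraTneq isT => h; move: e; rewrite h mul0r => /eqP; rewrite eq_sym oner_eq0.
have x0 : val x != 0 by apply: contraTneq isT => h; move: e; rewrite h mulr0 => /eqP; rewrite eq_sym oner_eq0.
have := congr1 (fun p : {poly rat} => size p) e; rewrite /= size_mul // size_poly1.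
have := size_poly_gt0 y; rewrite y0; case: (size y) => // k _.
rewrite addSn /= => e2; have := leq_addl k (size (val x)); by rewrite e2.
Qed.

Lemma RI_unit_of (x : RI) : (size (val x) <= 1)%N -> Dunit 1 (val x).[0] -> x \is a GRing.unit.
Proof.
move=> s1 /andP [x0 Dx]; apply/sunitE; exists ((val x).[0]^-1)%:P; split; first by rewrite /IS /= /IP hornerC.
have ex := size1_polyC s1; rewrite -horner_coef0 in ex.
set c := (val x).[0] in x0 ex *; by rewrite ex -polyCM mulVf // polyC1.
Qed.

Definition pc : RI := exist _ (pr 0)%:R%:P (introT idP (eq_ind_r (D 1) (Dpr 1 0) (hornerC _ _))).
Lemma pc_nunit : pc \isn't a GRing.unit.
Proof. apply/negP => /RI_unit_D /andP [_]; rewrite /= hornerC => h; exact: (Dninv (ltnSn 0) h). Qed.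

Definition divpc (x : RI) (h : D 1 ((val x).[0] / (pr 0)%:R)) : RI :=
  exist _ (val x * ((pr 0)%:R^-1)%:P) (introT idP (eq_ind_r (D 1) h (eq_trans (hornerM _ _ _) (congr1 (fun z => (val x).[0] * z) (hornerC _ _))))).
Lemma divpcE (x : RI) h : x = pc * @divpc x h.
Proof. apply: val_inj => /=; by rewrite mulrCA -polyCM mulfV ?prn0 // polyC1 mulr1. Qed.

Lemma Iatom_ev (x : RI) : irreducible_elt x -> (val x).[0] != 0.
Proof.
move=> [x0 [xu xat]]; apply/negP => /eqP e.
have h : D 1 ((val x).[0] / (pr 0)%:R) by rewrite e mul0r (Dint 1 0).
have [] := xat _ _ (divpcE h).
  by move=> pu; move: pc_nunit; rewrite pu.
by move=> /RI_unit_D /andP []; rewrite /= hornerM e mul0r eqxx.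
Qed.

Definition Xi : RI := exist _ 'X (introT idP (eq_ind_r (D 1) (Dint 1 0) (hornerX _))).

Lemma RI_natomic : ~ atomic RI.
Proof.
move=> at_.
have x0 : Xi != 0 by apply/negP => /eqP /(congr1 val) /= /eqP; rewrite polyX_eq0.
have xu : Xi \isn't a GRing.unit by apply/negP => /RI_unit_D /andP []; rewrite /= hornerX eqxx.
have [s [hs e]] := at_ _ x0 xu.
have e' : (val Xi).[0] = (val (\prod_(a <- s) a)).[0] by rewrite -e.
move: e'; rewrite sv_prod horner_prod /= hornerX => /esym /eqP.
rewrite prodf_seq_eq0 => /hasP [a /hs ha /= /eqP]; apply/eqP; exact: Iatom_ev.
Qed.

Definition aP (i : nat) : {poly rat} := (i.+1)%:R%:P * 'X + 1%:P.
Lemma aP0 i : (aP i).[0] = 1.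
Proof. by rewrite /aP hornerD hornerM hornerX !hornerC mulr0 add0r. Qed.
Lemma aP1 i : (aP i).[1] = (i.+2)%:R.
Proof. by rewrite /aP hornerD hornerM hornerX !hornerC mulr1 -[in RHS](addn1 i.+1) natrD. Qed.
Lemma aPsize i : size (aP i) = 2%N.
Proof. by rewrite /aP size_MXaddC polyC_eq0 pnatr_eq0 /= size_polyC pnatr_eq0. Qed.
Definition ai (i : nat) : RI := exist _ (aP i) (introT idP (eq_ind_r (D 1) (D1 1) (aP0 i))).

Lemma unit_small (u v : RI) : (val u * val v).[0] = 1 -> (size (val u) <= 1)%N -> u \is a GRing.unit.
Proof.
move=> e s1; apply: RI_unit_of => //; rewrite hornerM in e.
have u0 : (val u).[0] != 0 by apply: contraTneq isT => h; move: e; rewrite h mul0r => /eqP; rewrite eq_sym oner_eq0.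
rewrite /Dunit u0 /=; suff -> : ((val u).[0])^-1 = (val v).[0] by exact: IDval.
by apply: (mulfI u0); rewrite mulfV.
Qed.

Lemma ai_atom i : irreducible_elt (ai i).
Proof.
have a0 : val (ai i) != 0.
  rewrite /=; apply/eqP => h; move: (aP0 i); rewrite h horner0 => /eqP; by rewrite eq_sym oner_eq0.
split; first by apply: contra a0 => /eqP ->.
split; first by apply/negP => /RI_unit_size; rewrite /= aPsize.
move=> u v e.
have e0 : (val u * val v).[0] = 1 by rewrite -svM -e aP0.
have u0 : val u != 0 by apply: contra a0 => /eqP h; rewrite e svM h mul0r.
have v0 : val v != 0 by apply: contra a0 => /eqP h; rewrite e svM h mulr0.
have es : size (aP i) = (size (val u) + size (val v)).-1 by rewrite -size_mul // -svM -e.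
rewrite aPsize in es.
have gu := size_poly_gt0 (val u); have gv := size_poly_gt0 (val v); rewrite u0 in gu; rewrite v0 in gv.
have [hu|hu] := leqP (size (val u)) 1; first by left; apply: (unit_small e0).
right; apply: (unit_small (v:=u)); first by rewrite mulrC.
move: es hu gv; case: (size (val v)) => [|[|k']] //; case: (size (val u)) => [|[|k]] //.
by rewrite !addnS.
Qed.

Lemma ai_nassoc i j : i <> j -> ~ associated (ai i) (ai j).
Proof.
move=> ij [u [uu e]].
have ev := congr1 val e; rewrite /= in ev.
have ex := size1_polyC (RI_unit_size uu); rewrite -horner_coef0 in ex.
rewrite ex in ev.
have := congr1 (fun p => p.[0]) ev; rewrite /= hornerM hornerC !aP0 mulr1 => c1.
have := congr1 (fun p => p.[1]) ev; rewrite /= hornerM hornerC -c1 mul1r !aP1 => /eqP.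
by rewrite eqr_nat => /eqP [].
Qed.

Lemma RI_IDF : IDF RI.
Proof.
move=> h h0.
have hv0 : val h != 0 by apply: contra h0 => /eqP h1; apply/eqP; apply: val_inj.
have [L hL] := divs_fin hv0.
exists (pc :: map (insubd (1 : RI)) L) => a ha [c hc].
have a0 := Iatom_ev ha.
have [Di | nDi] := boolP (D 1 ((val a).[0])^-1).
  set a' := val a * ((val a).[0]^-1)%:P.
  have a'0 : a'.[0] = 1 by rewrite /a' hornerM hornerC mulfV.
  have Pa' : IS a' by rewrite /IS /= /IP a'0 D1.
  have ua : (val a).[0]%:P * a' = val a.
    by rewrite /a' mulrCA -polyCM mulfV // polyC1 mulr1.
  have a'h : a' %| val h.
    rewrite hc svM -ua; apply: dvdp_mulr; apply: dvdp_mull; exact: dvdpp.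
  exists (insubd (1 : RI) a'); first by rewrite inE; apply/orP; right; apply: map_f; apply: hL.
  have uu : (exist _ ((val a).[0]%:P) (introT idP (eq_ind_r (D 1) (IDval a) (hornerC _ _))) : RI) \is a GRing.unit.
    apply: RI_unit_of; first by rewrite /= size_polyC leq_b1.
    by rewrite /= hornerC /Dunit a0.
  exists (exist _ ((val a).[0]%:P) (introT idP (eq_ind_r (D 1) (IDval a) (hornerC _ _)))); split => //.
  by apply: val_inj; rewrite svM /= insubdK.
have [i hi Dh] := D2 (IDval a) a0 nDi.
move: hi Dh; rewrite ltnS leqn0 => /eqP -> Dh.
exists pc; first by rewrite inE eqxx.
exists (divpc Dh); split; last by rewrite mulrC -divpcE.
have [] := (proj2 (proj2 ha)) _ _ (divpcE Dh) => // pu.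
by move: pc_nunit; rewrite pu.
Qed.

Lemma infinite_case : exists R : idomainType, ~ atomic R /\ IDF R /\ atoms_up_to_assoc_infinite R.
Proof.
exists RI; split; first exact: RI_natomic.
split; first exact: RI_IDF.
exists ai; split; [exact: ai_atom | exact: ai_nassoc].
Qed.

Theorem mainTheorem4 (ell : option nat) :
  (if ell is Some n then (0 < n)%N else true) ->
  exists R : idomainType, ~ atomic R /\ IDF R /\ exactly_atoms R ell.
Proof.
case: ell => [n|] /= h.
  have [R [h1 [h2 h3]]] := finite_case h; by exists R.
exact: infinite_case.
Qed.
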